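(* Let $\mathcal{D}=\mathcal{P}_{\mathcal{D}}\cup\mathcal{L}_{\mathcal{D}}$ be a dominating set of the incidence graph of an arbitrary projective plane $\Pi_q$ of order $q$. Then $|\mathcal{D}|\geq q^2+q-(q-1)|\mathcal{P}_{\mathcal{D}}|$ and $|\mathcal{D}|\geq q^2+q-(q-1)|\mathcal{L}_{\mathcal{D}}|$. In particular, if $|\mathcal{D}|<3q-1$, then $|\mathcal{P}_{\mathcal{D}}|\geq q$ and $|\mathcal{L}_{\mathcal{D}}|\geq q$. *)

(* Defs.v *)
From mathcomp Require Import all_boot all_order all_algebra.
Set Implicit Arguments. Unset Strict Implicit. Unset Printing Implicit Defensive.

Definition collinear3 (P L : finType) (I : P -> L -> bool) (a b c : P) : Prop :=
  exists l : L, [&& I a l, I b l & I c l].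

Definition projective_plane_of_order (P L : finType) (I : P -> L -> bool) (q : nat) : Prop :=
  (forall x y : P, x != y -> exists! l : L, I x l && I y l) /\
  (forall l m : L, l != m -> exists! x : P, I x l && I x m) /\
  (exists a b c d : P,
      [/\ uniq [:: a; b; c; d],
          ~ collinear3 I a b c, ~ collinear3 I a b d,
          ~ collinear3 I a c d & ~ collinear3 I b c d]) /\
  (forall l : L, #|[set x : P | I x l]| = q.+1).

(* D = PD ∪ LD is a dominating set of the incidence (bipartite) graph:
   every vertex outside D is adjacent to a vertex of D. *)
Definition dominating (P L : finType) (I : P -> L -> bool)
    (PD : {set P}) (LD : {set L}) : Prop :=
  (forall x : P, x \notin PD -> exists2 l, l \in LD & I x l) /\
  (forall l : L, l \notin LD -> exists2 x, x \in PD & I x l).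

(* Main.v *)
Require Import Defs.
From mathcomp Require Import all_boot all_order all_algebra.
Set Implicit Arguments. Unset Strict Implicit. Unset Printing Implicit Defensive.
From mathcomp Require Import zify.
Import GRing.Theory Num.Theory.

Lemma card_bigcup_le (J T : finType) (A : {set J}) (F : J -> {set T}) :
  #|\bigcup_(i in A) F i| <= \sum_(i in A) #|F i|.
Proof.
elim/big_rec2: _ => [|i n U _ h]; first by rewrite cards0.
by rewrite (leq_trans (leq_card_setU _ _).1) ?leq_add2l.
Qed.

Lemma card_bigcup_disj (J T : finType) (A : {set J}) (F : J -> {set T}) :
  {in A &, forall i j, i != j -> [disjoint F i & F j]} ->
  #|\bigcup_(i in A) F i| = \sum_(i in A) #|F i|.
Proof.
move: {2}#|A| (erefl #|A|) => n; elim: n A => [|n IH] A hA hd.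
  by move/eqP: hA; rewrite cards_eq0 => /eqP ->; rewrite !big_set0 cards0.
have [a aA] : exists a, a \in A.
  by apply/set0Pn; rewrite -card_gt0 hA.
rewrite (big_setD1 a aA) (big_setD1 a aA) /= cardsU IH; last first.
- by move=> i j /setD1P[_ iA] /setD1P[_ jA]; apply: hd.
- by move: hA; rewrite (cardsD1 a) aA => -[].
have -> : F a :&: \bigcup_(j in A :\ a) F j = set0.
  apply: disjoint_setI0; apply: bigcup_disjoint => j /setD1P[ja jA].
  by apply: hd => //; rewrite eq_sym.
by rewrite cards0 subn0.
Qed.

Definition PP (P L : finType) (I : P -> L -> bool) (q : nat) :=
 [/\ forall x y, x != y -> exists! l, I x l && I y l,
     forall l m, l != m -> exists! x, I x l && I x m,
     forall l, #|[set x | I x l]| = q.+1,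
     forall p, exists l, ~~ I p l &
     forall l, exists p, ~~ I p l].


Lemma uniq_line (P L : finType) (I : P -> L -> bool) q (H : PP I q) x y l m :
  x != y -> I x l -> I y l -> I x m -> I y m -> l = m.
Proof.
case: H => h1 _ _ _ _ xy xl yl xm ym.
have [l0 [_ u]] := h1 x y xy.
by rewrite -(u l) ?xl ?yl // -(u m) ?xm ?ym.
Qed.

Lemma uniq_pt (P L : finType) (I : P -> L -> bool) q (H : PP I q) x y l m :
  l != m -> I x l -> I x m -> I y l -> I y m -> x = y.
Proof.
case: H => _ h2 _ _ _ lm xl xm yl ym.
have [x0 [_ u]] := h2 l m lm.
by rewrite -(u x) ?xl ?xm // -(u y) ?yl ?ym.
Qed.

Definition lf (P L : finType) (I : P -> L -> bool) (d : L) (x y : P) :=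
  odflt d [pick l | I x l && I y l].

Lemma lfP (P L : finType) (I : P -> L -> bool) q (H : PP I q) d x y :
  x != y -> I x (lf I d x y) && I y (lf I d x y).
Proof.
move=> xy; rewrite /lf; case: pickP => [l //|no].
case: H => h1 _ _ _ _; have [l [hl _]] := h1 x y xy.
by rewrite no in hl.
Qed.

Definition pf (P L : finType) (I : P -> L -> bool) (d : P) (l m : L) :=
  odflt d [pick x | I x l && I x m].

Lemma pfP (P L : finType) (I : P -> L -> bool) q (H : PP I q) d l m :
  l != m -> I (pf I d l m) l && I (pf I d l m) m.
Proof.
move=> lm; rewrite /pf; case: pickP => [x //|no].
case: H => _ h2 _ _ _; have [x [hx _]] := h2 l m lm.
by rewrite no in hx.
Qed.

Lemma deg (P L : finType) (I : P -> L -> bool) q (H : PP I q) p :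
  #|[set l | I p l]| = q.+1.
Proof.
have [_ _ hq hm _] := H.
have [l pl] := hm p.
apply/eqP; rewrite eqn_leq; apply/andP; split.
- rewrite -(hq l) -(@card_in_imset _ _ (pf I p ^~ l)).
    apply: subset_leq_card; apply/subsetP => x /imsetP[m]; rewrite inE => pm ->.
    have ml : m != l by apply: contraNneq pl => <-.
    by rewrite inE; case/andP: (pfP H p ml).
  move=> m1 m2; rewrite !inE => pm1 pm2 e.
  have m1l : m1 != l by apply: contraNneq pl => <-.
  have m2l : m2 != l by apply: contraNneq pl => <-.
  case/andP: (pfP H p m1l) => a1 b1; case/andP: (pfP H p m2l) => a2 b2.
  rewrite -e in a2 b2.
  have xp : pf I p m1 l != p by apply: contraNneq pl => <-.
  exact: (uniq_line H xp a1 pm1 a2 pm2).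
- rewrite -(hq l) -(@card_in_imset _ _ (lf I l p)).
    apply: subset_leq_card; apply/subsetP => m /imsetP[x]; rewrite inE => xl ->.
    have px : p != x by apply: contraNneq pl => ->.
    by rewrite inE; case/andP: (lfP H l px).
  move=> x1 x2; rewrite !inE => x1l x2l e.
  have p1 : p != x1 by apply: contraNneq pl => ->.
  have p2 : p != x2 by apply: contraNneq pl => ->.
  case/andP: (lfP H l p1) => a1 b1; case/andP: (lfP H l p2) => a2 b2.
  rewrite -e in a2 b2.
  have ml : lf I l p x1 != l by apply: contraNneq pl => <-.
  exact: (uniq_pt H ml b1 x1l b2 x2l).
Qed.

Lemma PP_dual (P L : finType) (I : P -> L -> bool) q (H : PP I q) :
  PP (fun l x => I x l) q.
Proof.
have [h1 h2 hq hm hp] := H.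
split => //; first by move=> l; exact: deg H l.
Qed.


Lemma card_ge (P L : finType) (I : P -> L -> bool) q (H : PP I q) (p : P) :
  q.+1 * q + 1 <= #|P|.
Proof.
have [_ _ hq _ _] := H.
set U := \bigcup_(m in [set l | I p l]) ([set x | I x m] :\ p).
have : #|p |: U| <= #|P| := max_card _.
have pU : p \notin U.
  by apply/bigcupP => -[m _]; rewrite !inE eqxx.
rewrite cardsU1 pU card_bigcup_disj.
  rewrite (eq_bigr (fun _ => q)).
    by rewrite sum_nat_const (deg H) addnC.
  move=> m; rewrite inE => pm.
  by move: (hq m); rewrite (cardsD1 p) inE pm => -[].
move=> m1 m2; rewrite !inE => p1 p2 m12.
rewrite -setI_eq0; apply/eqP/setP => x; rewrite !inE.
apply/negbTE; apply/negP => /andP[/andP[xp x1] /andP[_ x2]].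
by move/eqP: xp; apply; apply: (uniq_pt H m12 x1 x2 p1 p2).
Qed.

Lemma cover_le (P L : finType) (I : P -> L -> bool) q (H : PP I q)
  (PD : {set P}) (LD : {set L})
  (dom : forall l, l \notin LD -> exists2 x, x \in PD & I x l) p0 (dl : L) :
  p0 \in PD -> #|~: LD| <= q.+1 + (#|PD| - 1) * q.
Proof.
move=> p0D.
set U := \bigcup_(p in PD :\ p0) ([set l | I p l] :\ lf I dl p p0).
have sub : ~: LD \subset [set l | I p0 l] :|: U.
  apply/subsetP => l; rewrite inE => /dom [x xD xl].
  rewrite !inE; case: (eqVneq x p0) => [<-|xp0]; first by rewrite xl.
  case/andP: (lfP H dl xp0) => a b.
  case: (eqVneq l (lf I dl x p0)) => [->|lne]; first by rewrite b.
  apply/orP; right; apply/bigcupP; exists x; first by rewrite !inE xp0.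
  by rewrite !inE lne.
apply: (leq_trans (subset_leq_card sub)).
apply: (leq_trans (leq_card_setU _ _).1).
rewrite (deg H) leq_add2l.
apply: (leq_trans (card_bigcup_le _ _)).
rewrite (eq_bigr (fun _ => q)).
  by rewrite sum_nat_const (cardsD1 p0 PD) p0D add1n subn1 /= mulnC.
move=> p; rewrite !inE => /andP[pp0 _].
move: (deg H p); rewrite (cardsD1 (lf I dl p p0)) inE.
by case/andP: (lfP H dl pp0) => -> _ [].
Qed.

Lemma pp_PP (P L : finType) (I : P -> L -> bool) q :
  projective_plane_of_order I q -> PP I q /\ exists a : P, True.
Proof.
case=> h1 [h2 [[a [b [c [d [hu nabc _ _ _]]]]] hq]].
have ab : a != b by apply: contraTneq hu => ->; rewrite /= inE eqxx.
have ac : a != c by apply: contraTneq hu => ->; rewrite /= !inE eqxx orbT.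
have bc : b != c by apply: contraTneq hu => ->; rewrite /= !inE eqxx /= ?orbT ?andbF.
split; last by exists a.
have Hpre : forall x y l m, x != y -> I x l -> I y l -> I x m -> I y m -> l = m.
  move=> x y l m xy xl yl xm ym.
  have [l0 [_ u]] := h1 x y xy.
  by rewrite -(u l) ?xl ?yl // -(u m) ?xm ?ym.
split => // [p|l].
- have [lab /andP[al bl]] : exists l, I a l && I b l by have [l [? _]] := h1 a b ab; exists l.
  have [lac /andP[al' cl']] : exists l, I a l && I c l by have [l [? _]] := h1 a c ac; exists l.
  have [lbc /andP[bl'' cl'']] : exists l, I b l && I c l by have [l [? _]] := h1 b c bc; exists l.
  case: (eqVneq p a) => [->|pa].
    exists lbc; apply/negP => al3; apply: nabc; exists lbc; by rewrite al3 bl'' cl''.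
  case: (boolP (I p lab)) => plab; last by exists lab.
  case: (boolP (I p lac)) => plac; last by exists lac.
  exfalso; apply: nabc; exists lab.
  have e : lab = lac by apply: (Hpre p a) => //.
  by rewrite al bl e cl'.
- case: (boolP (I a l)) => al; last by exists a.
  case: (boolP (I b l)) => bl; last by exists b.
  case: (boolP (I c l)) => cl; last by exists c.
  by exfalso; apply: nabc; exists l; rewrite al bl cl.
Qed.

Lemma t1 (q k m : nat) (K1 : q ^ 2 + q <= m + k * q) :
  ((k + m)%:Z >= (q ^ 2 + q)%:Z - (q%:Z - 1) * k%:Z)%R.
Proof. nia. Qed.
Lemma t3 (q k m : nat) (K1 : q ^ 2 + q <= m + k * q) (h : k + m < 3 * q - 1) : q <= k.
Proof. nia. Qed.

Theorem proposition2 (P L : finType) (I : P -> L -> bool) (q : nat)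
  (hPi : projective_plane_of_order I q)
  (PD : {set P}) (LD : {set L}) (hD : dominating I PD LD) :
  [/\ ((#|PD| + #|LD|)%:Z >= (q ^ 2 + q)%:Z - (q%:Z - 1) * #|PD|%:Z)%R,
      ((#|PD| + #|LD|)%:Z >= (q ^ 2 + q)%:Z - (q%:Z - 1) * #|LD|%:Z)%R &
      (#|PD| + #|LD| < 3 * q - 1)%N -> (q <= #|PD|)%N /\ (q <= #|LD|)%N].
Proof.
have [H [a _]] := pp_PP hPi.
have Hd := PP_dual H.
have [_ _ _ hm _] := H.
have [l0 _] := hm a.
have F1 := card_ge H a.
have F2 := card_ge Hd l0.
have F3 := cardsC LD.
have F4 := cardsC PD.
case: hD => dom2 dom1.
have EQ : q.+1 * q + 1 = q ^ 2 + q + 1 by rewrite mulSn expnSr expn1; lia.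
rewrite EQ in F1 F2.
have K1 : q ^ 2 + q <= #|LD| + #|PD| * q.
  case: (set_0Vmem PD) => [e|[p0 p0D]].
    have : ~: LD = set0.
      apply/setP => l; rewrite !inE; apply/negbTE/negP => /dom1 [x].
      by rewrite e inE.
    move=> e'; rewrite e' cards0 in F3; rewrite e cards0; lia.
  have := cover_le H dom1 l0 p0D.
  have : 0 < #|PD| by apply/card_gt0P; exists p0.
  case: #|PD| => // k _; rewrite subSS subn0 mulSn.
  move: (q ^ 2) (k * q) F2 F3 => X Y; lia.
have K2 : q ^ 2 + q <= #|PD| + #|LD| * q.
  case: (set_0Vmem LD) => [e|[p0 p0D]].
    have : ~: PD = set0.
      apply/setP => l; rewrite !inE; apply/negbTE/negP => /dom2 [x].
      by rewrite e inE.
    move=> e'; rewrite e' cards0 in F4; rewrite e cards0; lia.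
  have := cover_le Hd dom2 a p0D.
  have : 0 < #|LD| by apply/card_gt0P; exists p0.
  case: #|LD| => // k _; rewrite subSS subn0 mulSn.
  move: (q ^ 2) (k * q) F1 F4 => X Y; lia.
split.
- exact: t1.
- have := t1 K2; rewrite [(#|LD| + _)%N]addnC; exact.
- move=> h; split; first exact: (t3 K1).
  by apply: (t3 K2); rewrite addnC.
Qed.
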